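(* Suppose $f$ is $L_f$-smooth, $\mathbf{c}$ is $L_c$-smooth, and there exist $C,G>0$ such that for all $\mathbf{x}$: $\|\nabla f(\mathbf{x})\|\le G$, all subgradients of $h$ and $g$ have norm at most $G$, $\|\nabla\mathbf{c}(\mathbf{x})\|\le G$, $\|\mathbf{c}(\mathbf{x})\|\le C$. Then for any $k\ge0$, $\|\mathbf{u}^{k+1}\|^2\le3\|\mathbf{e}^k\|^2+3(L_{\rho_k}^2+(\mu_k\beta)^{-2})\|\mathbf{w}^{k+1}-\mathbf{w}^k\|^2$, and $\max\{\|\mathbf{u}^{k+1}\|^2,\|\mathbf{x}^{k+1}-\mathrm{prox}_{\mu_kg}(\mathbf{z}^k)\|^2\}\le3\|\mathbf{e}^k\|^2+\bigl(3(L_{\rho_k}^2+(\mu_k\beta)^{-2})+\beta^{-2}\bigr)\|\mathbf{w}^{k+1}-\mathbf{w}^k\|^2$.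
   Context: Problem: $\min f(\mathbf{x})+h(\mathbf{x})-g(\mathbf{x})$ s.t. $\mathbf{c}(\mathbf{x})=\mathbf{0}$, $f=\mathbb{E}_\xi[\mathbf{f}(\cdot,\xi)]$, $h,g$ proper closed convex. $Q_\rho(\mathbf{x})=f(\mathbf{x})+\frac{\rho}{2}\|\mathbf{c}(\mathbf{x})\|^2$, $L_\rho$-smooth with $L_\rho=\rho(\rho_0^{-1}L_f+G^2+CL_c)$. Iterates $\mathbf{w}^k=(\mathbf{x}^k,\mathbf{z}^k)$ of MoSSP-P or MoSSP-R: $\mathbf{x}^{k+1}=\mathrm{prox}_{\mu_kh}(\mathbf{z}^k-\mu_k\mathbf{G}^k)$, $\mathbf{z}^{k+1}=\mathbf{z}^k-\beta(\mathrm{prox}_{\mu_kg}(\mathbf{z}^k)-\mathbf{x}^{k+1})$, with $\mathbf{G}^k$ the Polyak-momentum estimator $\mathbf{S}^k$ or recursive-momentum estimator $\mathbf{D}^k$ of $\nabla Q_{\rho_k}(\mathbf{x}^k)$; $\mathbf{e}^k:=\mathbf{G}^k-\nabla Q_{\rho_k}(\mathbf{x}^k)$; $\mathbf{u}^{k+1}:=\nabla Q_{\rho_k}(\mathbf{x}^{k+1})-\mathbf{G}^k+\mu_k^{-1}(\mathrm{prox}_{\mu_kg}(\mathbf{z}^k)-\mathbf{x}^{k+1})$, which lies in $\partial(Q_{\rho_k}+h)(\mathbf{x}^{k+1})-\partial g(\mathrm{prox}_{\mu_kg}(\mathbf{z}^k))$. *)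

(* Defs.v *)
From HB Require Import structures.
From mathcomp Require Import all_boot all_order all_algebra.
From mathcomp Require Import all_classical all_reals all_analysis.
Set Implicit Arguments. Unset Strict Implicit. Unset Printing Implicit Defensive.
Import Order.TTheory GRing.Theory Num.Theory.
Import numFieldNormedType.Exports.
Local Open Scope ring_scope.

Section Defs.
Variables (R : realType).

Definition dot {n : nat} (u v : 'rV[R]_n) : R := \sum_(i < n) u 0 i * v 0 i.
Definition enorm {n : nat} (u : 'rV[R]_n) : R := Num.sqrt (dot u u).

Definition is_gradient {n : nat} (F : 'rV[R]_n -> R) (dF : 'rV[R]_n -> 'rV[R]_n) :=
  forall x, differentiable F x /\ forall v, 'd F x v = dot v (dF x).

(* J is the Jacobian (transposed, n x m : "nabla c") of c : R^n -> R^m :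
   dc(x)[v] = v *m J x *)
Definition is_jacobian {n m : nat} (c : 'rV[R]_n -> 'rV[R]_m)
  (J : 'rV[R]_n -> 'M[R]_(n, m)) :=
  forall x, differentiable c x /\ forall v, 'd c x v = v *m J x.

Definition opnorm_le {n m : nat} (A : 'M[R]_(n, m)) (b : R) :=
  forall v : 'rV[R]_n, enorm (v *m A) <= b * enorm v.

Definition smooth_fun {n : nat} (F : 'rV[R]_n -> R) (dF : 'rV[R]_n -> 'rV[R]_n) (L : R) :=
  is_gradient F dF /\ forall x y, enorm (dF x - dF y) <= L * enorm (x - y).

Definition smooth_map {n m : nat} (c : 'rV[R]_n -> 'rV[R]_m)
  (J : 'rV[R]_n -> 'M[R]_(n, m)) (L : R) :=
  is_jacobian c J /\ forall x y, opnorm_le (J x - J y) (L * enorm (x - y)).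

Definition convex_fun {n : nat} (h : 'rV[R]_n -> R) :=
  forall x y (t : R), 0 <= t <= 1 ->
    h (t *: x + (1 - t) *: y) <= t * h x + (1 - t) * h y.

Definition subgrad {n : nat} (h : 'rV[R]_n -> R) (x s : 'rV[R]_n) :=
  forall y, h x + dot s (y - x) <= h y.

Definition is_prox {n : nat} (mu : R) (h : 'rV[R]_n -> R) (y p : 'rV[R]_n) :=
  forall x, h p + (2 * mu)^-1 * enorm (p - y) ^+ 2
            <= h x + (2 * mu)^-1 * enorm (x - y) ^+ 2.

Definition Qpen {n m : nat} (f : 'rV[R]_n -> R) (c : 'rV[R]_n -> 'rV[R]_m)
  (rho : R) (x : 'rV[R]_n) : R := f x + rho / 2 * enorm (c x) ^+ 2.

Definition Lrho (Lf Lc G C rho0 rho : R) : R := rho * (rho0^-1 * Lf + G ^+ 2 + C * Lc).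

End Defs.

(* Main.v *)
Require Import Defs.
From HB Require Import structures.
From mathcomp Require Import all_boot all_order all_algebra.
From mathcomp Require Import all_classical all_reals all_analysis.
From mathcomp Require Import ring lra.
Import Order.TTheory GRing.Theory Num.Theory.
Import numFieldNormedType.Exports.
Local Open Scope ring_scope.

Set Implicit Arguments. Unset Strict Implicit.


Section Helpers.
Variable R : realType.
Implicit Types a b k : R.

Lemma dotE n (u v : 'rV[R]_n) : dot u v = (u *m v^T) 0 0.
Proof. by rewrite /dot !mxE; apply: eq_bigr => i _; rewrite mxE. Qed.

Lemma dotC n (u v : 'rV[R]_n) : dot u v = dot v u.
Proof. by rewrite /dot; apply: eq_bigr => i _; rewrite mulrC. Qed.

Lemma dotDl n (u v w : 'rV[R]_n) : dot (u + v) w = dot u w + dot v w.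
Proof. by rewrite /dot -big_split; apply: eq_bigr => i _; rewrite mxE mulrDl. Qed.

Lemma dotZl n k (u w : 'rV[R]_n) : dot (k *: u) w = k * dot u w.
Proof. by rewrite /dot mulr_sumr; apply: eq_bigr => i _; rewrite mxE mulrA. Qed.

Lemma dotNl n (u w : 'rV[R]_n) : dot (- u) w = - dot u w.
Proof. by rewrite -scaleN1r dotZl mulN1r. Qed.

Lemma dotBl n (u v w : 'rV[R]_n) : dot (u - v) w = dot u w - dot v w.
Proof. by rewrite dotDl dotNl. Qed.

Lemma dotDr n (u v w : 'rV[R]_n) : dot w (u + v) = dot w u + dot w v.
Proof. by rewrite !(dotC w) dotDl. Qed.
Lemma dotZr n k (u w : 'rV[R]_n) : dot w (k *: u) = k * dot w u.
Proof. by rewrite !(dotC w) dotZl. Qed.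
Lemma dotBr n (u v w : 'rV[R]_n) : dot w (u - v) = dot w u - dot w v.
Proof. by rewrite !(dotC w) dotBl. Qed.

Lemma dot_ge0 n (u : 'rV[R]_n) : 0 <= dot u u.
Proof. by rewrite /dot; apply: sumr_ge0 => i _; rewrite -expr2 sqr_ge0. Qed.

Lemma enorm_ge0 n (u : 'rV[R]_n) : 0 <= enorm u.
Proof. exact: sqrtr_ge0. Qed.

Lemma enorm_sq n (u : 'rV[R]_n) : enorm u ^+ 2 = dot u u.
Proof. by rewrite /enorm sqr_sqrtr // dot_ge0. Qed.

Lemma dot0_eq0 n (u : 'rV[R]_n) : dot u u = 0 -> u = 0.
Proof.
move=> /eqP; rewrite /dot psumr_eq0; last by move=> i _; rewrite -expr2 sqr_ge0.
move=> /allP H; apply/rowP => i; rewrite !mxE.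
have := H i (mem_index_enum _); rewrite /= mulf_eq0 orbb => /eqP //.
Qed.

Lemma dot0l n (w : 'rV[R]_n) : dot 0 w = 0.
Proof. by rewrite -(scale0r (0 : 'rV[R]_n)) dotZl mul0r. Qed.

Lemma sq_le a b : 0 <= b -> a ^+ 2 <= b ^+ 2 -> a <= b.
Proof. move=> hb h; nra. Qed.

Lemma amgm a b l : 0 < l -> 2 * (a * b) <= l * (a * a) + l^-1 * (b * b).
Proof.
move=> l0; have li : l * l^-1 = 1 by rewrite mulfV // gt_eqF.
have li0 : 0 < l^-1 by rewrite invr_gt0.
have : 0 <= (l * a - b) ^+ 2 * l^-1 by rewrite mulr_ge0 ?sqr_ge0 // ltW.
have -> : (l * a - b) ^+ 2 * l^-1 = l * (a * a) + l^-1 * (b * b) - 2 * (a * b).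
  by field; rewrite gt_eqF.
lra.
Qed.

Lemma cs n (u v : 'rV[R]_n) : dot u v <= enorm u * enorm v.
Proof.
have [u0|] := eqVneq (enorm u) 0.
  have : dot u u = 0 by rewrite -enorm_sq u0 expr0n.
  by move=> /dot0_eq0 ->; rewrite dot0l mulr_ge0 // enorm_ge0.
have [v0|] := eqVneq (enorm v) 0.
  have : dot v v = 0 by rewrite -enorm_sq v0 expr0n.
  by move=> /dot0_eq0 ->; rewrite dotC dot0l mulr_ge0 // enorm_ge0.
move=> nv nu.
have pu : 0 < enorm u by rewrite lt_def nu enorm_ge0.
have pv : 0 < enorm v by rewrite lt_def nv enorm_ge0.
have l0 : 0 < enorm v / enorm u by rewrite divr_gt0.
have H : 2 * dot u v <= (enorm v / enorm u) * dot u u + (enorm v / enorm u)^-1 * dot v v.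
  rewrite /dot mulr_sumr !mulr_sumr -big_split /=; apply: ler_sum => i _.
  exact: amgm.
move: H; rewrite -!enorm_sq invf_div.
have -> : enorm v / enorm u * enorm u ^+ 2 + enorm u / enorm v * enorm v ^+ 2
   = 2 * (enorm u * enorm v) by field; rewrite nu nv.
move=> H; lra.
Qed.

Lemma enormD n (u v : 'rV[R]_n) : enorm (u + v) <= enorm u + enorm v.
Proof.
apply: sq_le; first by rewrite addr_ge0 // enorm_ge0.
rewrite enorm_sq dotDl !dotDr (dotC v u) -!enorm_sq.
have := cs u v; nra.
Qed.

Lemma enormZ n k (u : 'rV[R]_n) : enorm (k *: u) = `|k| * enorm u.
Proof.
apply/eqP; rewrite eq_le; apply/andP; split; apply: sq_le;
  rewrite ?mulr_ge0 ?enorm_ge0 //.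
- by rewrite enorm_sq dotZl dotZr exprMn -enorm_sq real_normK ?num_real // mulrA -expr2.
- by rewrite enorm_sq dotZl dotZr exprMn -enorm_sq real_normK ?num_real // mulrA -expr2.
Qed.

Lemma enormN n (u : 'rV[R]_n) : enorm (- u) = enorm u.
Proof. by rewrite -scaleN1r enormZ normrN normr1 mul1r. Qed.

Lemma enormB_sym n (u v : 'rV[R]_n) : enorm (u - v) = enorm (v - u).
Proof. by rewrite -enormN opprB. Qed.

Lemma dot_inj n (a b : 'rV[R]_n) : (forall v, dot v a = dot v b) -> a = b.
Proof.
move=> H; apply/eqP; rewrite -subr_eq0; apply/eqP/dot0_eq0.
by rewrite dotBr H subrr.
Qed.

Lemma dot_mulmx n m (v : 'rV[R]_n) (A : 'M[R]_(n, m)) (w : 'rV[R]_m) :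
  dot (v *m A) w = dot v (w *m A^T).
Proof. by rewrite !dotE trmx_mul trmxK mulmxA. Qed.

Lemma opnorm_tr n m (A : 'M[R]_(n, m)) B : 0 <= B -> opnorm_le A B ->
  forall w : 'rV[R]_m, enorm (w *m A^T) <= B * enorm w.
Proof.
move=> B0 HA w.
have [z|nz] := eqVneq (enorm (w *m A^T)) 0.
  by rewrite z mulr_ge0 // enorm_ge0.
have pz : 0 < enorm (w *m A^T) by rewrite lt_def nz enorm_ge0.
have H : enorm (w *m A^T) ^+ 2 <= B * enorm w * enorm (w *m A^T).
  rewrite enorm_sq -dot_mulmx dotC.
  apply: le_trans (cs _ _) _; rewrite -mulrA [B * _]mulrC -mulrA.
  by apply: ler_wpM2l; [exact: enorm_ge0| rewrite mulrC; apply: HA].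
rewrite expr2 in H; by rewrite -(ler_pM2r pz).
Qed.

End Helpers.


Section H2.
Variable R : realType.

Lemma gradQE n m (f : 'rV[R]_n -> R) gradf (c : 'rV[R]_n -> 'rV[R]_m) J r Q :
  is_gradient f gradf -> is_jacobian c J -> is_gradient (Qpen f c r) Q ->
  forall y, Q y = gradf y + r *: (c y *m (J y)^T).
Proof.
move=> hf hc hQ y; apply: dot_inj => v.
have [dQ eQ] := hQ y; have [df ef] := hf y; have [dc ec] := hc y.
rewrite -eQ -deriveE //.
have dcv : derivable c y v by apply: diff_derivable.
have dci : forall i, derivable (fun x => c x 0 i) y v.
  by move=> i; move: dcv => /derivable_mxP; apply.
have Dci : forall i, 'D_v (fun x => c x 0 i) y = (v *m J y) 0 i.
  by move=> i; rewrite -ec -deriveE // derive_mx // mxE.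
have -> : Qpen f c r = f + (r / 2) \*: (\sum_(i < m) ((fun x => c x 0 i) * (fun x => c x 0 i))).
  apply/funext => x; rewrite /Qpen enorm_sq /dot /= fct_sumE /=.
  by rewrite /GRing.scale /=.
have dfv : derivable f y v by apply: diff_derivable.
have dS : derivable (\sum_(i < m) ((fun x => c x 0 i) * (fun x => c x 0 i))) y v.
  by apply: derivable_sum => i; apply: derivableM.
rewrite deriveD //; last exact: derivableZ.
rewrite deriveZ // derive_sum //; last by move=> i; apply: derivableM.
have -> : \sum_(i < m) 'D_v ((fun x : 'rV_n => c x 0 i) * (fun x : 'rV_n => c x 0 i)) y
   = \sum_(i < m) 2 * (c y 0 i * (v *m J y) 0 i).
  apply: congr_big => // i _; rewrite (deriveM (dci i) (dci i)) Dci.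
  rewrite /GRing.scale /=; ring.
rewrite deriveE // ef dotDr dotZr -dot_mulmx; congr (_ + _).
rewrite /dot [LHS]/GRing.scale /= !mulr_sumr; apply: eq_bigr => i _; field.
by [].
Qed.

End H2.


Section H3.
Variable R : realType.

Lemma line_quot n m (c : 'rV[R]_n -> 'rV[R]_m) (d b : 'rV[R]_n) (t : R) :
  (fun h : R => h^-1 *: (((fun s : R => c (s *: d + b)) \o shift t) (h *: 1) - c (t *: d + b)))
  = (fun h : R => h^-1 *: ((c \o shift (t *: d + b)) (h *: d) - c (t *: d + b))).
Proof.
apply/funext => h /=; congr (_ *: (c _ - _)).
by rewrite [_%:A]mulr1 scalerDl addrA.
Qed.

Lemma line_derivable n m (c : 'rV[R]_n -> 'rV[R]_m) (d b : 'rV[R]_n) (t : R) :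
  derivable c (t *: d + b) d -> derivable (fun s : R => c (s *: d + b)) t 1.
Proof. by rewrite /derivable line_quot. Qed.

Lemma line_derive n m (c : 'rV[R]_n -> 'rV[R]_m) (d b : 'rV[R]_n) (t : R) :
  'D_1 (fun s : R => c (s *: d + b)) t = 'D_d c (t *: d + b).
Proof. by rewrite /derive line_quot. Qed.

Lemma c_lip n m (c : 'rV[R]_n -> 'rV[R]_m) J G : is_jacobian c J -> 0 <= G ->
  (forall y, opnorm_le (J y) G) -> forall a b, enorm (c a - c b) <= G * enorm (a - b).
Proof.
move=> hc G0 HJ a b.
set w := c a - c b; set d := a - b.
pose ct := fun s : R => c (s *: d + b).
have dct : forall t, derivable ct t 1.
  by move=> t; apply: line_derivable; apply: diff_derivable; case: (hc (t *: d + b)).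
have Dct : forall t, 'D_1 ct t = d *m J (t *: d + b).
  move=> t; rewrite /ct line_derive deriveE; last by case: (hc (t *: d + b)).
  by case: (hc (t *: d + b)) => _ ->.
have dcti : forall t i, derivable (fun s => ct s 0 i) t 1.
  by move=> t i; move: (dct t) => /derivable_mxP; apply.
have Dcti : forall t i, 'D_1 (fun s => ct s 0 i) t = (d *m J (t *: d + b)) 0 i.
  by move=> t i; rewrite -Dct derive_mx // mxE.
pose phi := \sum_(i < m) ((fun s => ct s 0 i) * cst (w 0 i)).
have phiE : forall t, phi t = dot (ct t) w.
  by move=> t; rewrite /phi fct_sumE /dot.
have dphi : forall t, derivable phi t 1.
  by move=> t; apply: derivable_sum => i; apply: derivableM => //; exact: derivable_cst.
have Dphi : forall t, 'D_1 phi t = dot (d *m J (t *: d + b)) w.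
  move=> t; rewrite derive_sum; last first.
    by move=> i; apply: derivableM => //; exact: derivable_cst.
  rewrite /dot; apply: eq_bigr => i _.
  rewrite (deriveM (dcti t i) (derivable_cst _ _ _)).
  by rewrite derive_cst Dcti /GRing.scale /= mulr0 add0r mulrC.
have [xi xin Hxi] : exists2 xi, xi \in `]0, 1[%R & phi 1 - phi 0 = 'D_1 phi xi * (1 - 0).
  apply: (@MVT R phi (fun x => 'D_1 phi x)).
  - exact: ltr01.
  - by move=> x xin; apply: derivableP.
  - by apply: derivable_within_continuous => x xin.
move: Hxi; rewrite !phiE /ct scale1r scale0r add0r /d subrK -dotBl -/w subr0 mulr1 Dphi.
move=> Hw.
have H1 : enorm w ^+ 2 <= G * enorm d * enorm w.
  rewrite enorm_sq Hw; apply: le_trans (cs _ _) _.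
  by apply: ler_wpM2r; [exact: enorm_ge0| apply: HJ].
have w0 := enorm_ge0 w.
have X0 : 0 <= G * enorm d by rewrite mulr_ge0 // enorm_ge0.
move: H1 X0; set X := G * enorm d => H1 X0.
nra.
Qed.

End H3.


Section H4.
Variable R : realType.

Lemma gradQ_lip n m (f : 'rV[R]_n -> R) gradf Lf (c : 'rV[R]_n -> 'rV[R]_m) J Lc G C r Q :
  0 <= G -> 0 <= r -> 0 <= Lc ->
  smooth_fun f gradf Lf -> smooth_map c J Lc ->
  (forall y, opnorm_le (J y) G) -> (forall y, enorm (c y) <= C) ->
  is_gradient (Qpen f c r) Q ->
  forall a b, enorm (Q a - Q b) <= (Lf + r * (G ^+ 2 + C * Lc)) * enorm (a - b).
Proof.
move=> G0 r0 Lc0 [hf Lipf] [hc LipJ] HJ HC hQ a b.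
have gQ := gradQE hf hc hQ.
have E : Q a - Q b = (gradf a - gradf b) +
   r *: ((c a - c b) *m (J a)^T + c b *m (J a - J b)^T).
  rewrite !gQ linearB /= mulmxBl mulmxBr addrA subrK scalerBr.
  by rewrite opprD addrACA.
rewrite E; apply: le_trans (enormD _ _) _.
rewrite enormZ ger0_norm //.
have d0 := enorm_ge0 (a - b).
have h1 : enorm ((c a - c b) *m (J a)^T) <= G * (G * enorm (a - b)).
  apply: le_trans (opnorm_tr G0 (HJ a) _) _.
  by apply: ler_wpM2l => //; apply: c_lip hc G0 HJ a b.
have h2 : enorm (c b *m (J a - J b)^T) <= Lc * enorm (a - b) * C.
  apply: le_trans (opnorm_tr _ (LipJ a b) _) _; first by rewrite mulr_ge0.
  by apply: ler_wpM2l; [rewrite mulr_ge0 | apply: HC].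
have h3 := enormD ((c a - c b) *m (J a)^T) (c b *m (J a - J b)^T).
have h4 : r * enorm ((c a - c b) *m (J a)^T + c b *m (J a - J b)^T)
   <= r * (G * (G * enorm (a - b)) + Lc * enorm (a - b) * C).
  by apply: ler_wpM2l => //; apply: le_trans h3 _; apply: lerD.
have -> : (Lf + r * (G ^+ 2 + C * Lc)) * enorm (a - b)
   = Lf * enorm (a - b) + r * (G * (G * enorm (a - b)) + Lc * enorm (a - b) * C)
   by ring.
by apply: lerD => //; apply: Lipf.
Qed.

End H4.

Unset Implicit Arguments. Set Strict Implicit.


Theorem lemmaC3 (R : realType) (n m : nat)
  (f : 'rV[R]_n -> R) (gradf : 'rV[R]_n -> 'rV[R]_n) (Lf : R)
  (c : 'rV[R]_n -> 'rV[R]_m) (Jc : 'rV[R]_n -> 'M[R]_(n, m)) (Lc : R)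
  (h g : 'rV[R]_n -> R) (G C rho0 beta : R)
  (gradQ : R -> 'rV[R]_n -> 'rV[R]_n)
  (rho mu : nat -> R) (Gk x z p : nat -> 'rV[R]_n) :
  0 <= Lf -> 0 <= Lc -> 0 < G -> 0 < C ->
  smooth_fun f gradf Lf -> smooth_map c Jc Lc ->
  (forall y, enorm (gradf y) <= G) ->
  (forall y s, subgrad h y s -> enorm s <= G) ->
  (forall y s, subgrad g y s -> enorm s <= G) ->
  (forall y, opnorm_le (Jc y) G) ->
  (forall y, enorm (c y) <= C) ->
  convex_fun h -> convex_fun g ->
  (forall r, is_gradient (Qpen f c r) (gradQ r)) ->
  0 < rho0 -> (forall k, rho0 <= rho k) ->
  0 < beta -> (forall k, 0 < mu k) ->
  (* p k = prox_{mu_k g}(z^k) *)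
  (forall k, is_prox (mu k) g (z k) (p k)) ->
  (* x^{k+1} = prox_{mu_k h}(z^k - mu_k G^k) *)
  (forall k, is_prox (mu k) h (z k - mu k *: Gk k) (x k.+1)) ->
  (* z^{k+1} = z^k - beta (prox_{mu_k g}(z^k) - x^{k+1}) *)
  (forall k, z k.+1 = z k - beta *: (p k - x k.+1)) ->
  forall k : nat,
    let e := Gk k - gradQ (rho k) (x k) in
    let u := gradQ (rho k) (x k.+1) - Gk k + (mu k)^-1 *: (p k - x k.+1) in
    let dw2 := enorm (x k.+1 - x k) ^+ 2 + enorm (z k.+1 - z k) ^+ 2 in
    let L := Lrho Lf Lc G C rho0 (rho k) in
    enorm u ^+ 2 <= 3 * enorm e ^+ 2 + 3 * (L ^+ 2 + (mu k * beta)^-2) * dw2 /\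
    Num.max (enorm u ^+ 2) (enorm (x k.+1 - p k) ^+ 2)
      <= 3 * enorm e ^+ 2 + (3 * (L ^+ 2 + (mu k * beta)^-2) + beta^-2) * dw2.
Proof.
move=> Lf0 Lc0 G0 C0 sf sc _ _ _ HJ HC _ _ hQ r00 rr b0 mu0 _ _ hz k e u dw2 L.
have rk0 : 0 < rho k by apply: lt_le_trans (rr k).
have Lip := gradQ_lip (ltW G0) (ltW rk0) Lc0 sf sc HJ HC (hQ (rho k)).
have L0 : Lf + rho k * (G ^+ 2 + C * Lc) <= L.
  have q1 : 1 <= rho k / rho0 by rewrite ler_pdivlMr // mul1r.
  have -> : L = Lf + rho k * (G ^+ 2 + C * Lc) + (rho k / rho0 - 1) * Lf.
    by rewrite /L /Lrho; ring.
  by rewrite lerDl mulr_ge0 // subr_ge0.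
have Lpos : 0 <= L.
  have : 0 <= rho k * (G ^+ 2 + C * Lc).
    exact: mulr_ge0 (ltW rk0) (addr_ge0 (sqr_ge0 G) (mulr_ge0 (ltW C0) Lc0)).
  move: L0; lra.
set A := gradQ (rho k) (x k.+1) - gradQ (rho k) (x k).
set Cc := (mu k)^-1 *: (p k - x k.+1).
have uE : u = A + (- e) + Cc.
  by rewrite /u /A /e opprB (addrA (_ - _)) subrK.
have pxE : p k - x k.+1 = - beta^-1 *: (z k.+1 - z k).
  rewrite hz addrAC subrr add0r scaleNr scalerN opprK scalerA mulVf ?gt_eqF //.
  by rewrite scale1r.
set X := enorm (x k.+1 - x k); set Z := enorm (z k.+1 - z k).
have X0 : 0 <= X by apply: enorm_ge0.
have Z0 : 0 <= Z by apply: enorm_ge0.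
have hA : enorm A <= L * X.
  apply: le_trans (Lip _ _) _; apply: ler_wpM2r => //.
have A0 := enorm_ge0 A.
have hC : enorm Cc = (mu k * beta)^-1 * Z.
  rewrite /Cc pxE scalerA enormZ mulrN normrN ger0_norm ?invfM //.
  by rewrite mulr_ge0 // invr_ge0 ltW.
have hP : enorm (x k.+1 - p k) = beta^-1 * Z.
  rewrite enormB_sym pxE enormZ normrN ger0_norm //.
  by rewrite invr_ge0 ltW.
set E := enorm e.
have E0 : 0 <= E by apply: enorm_ge0.
have hU : enorm u <= enorm A + E + enorm Cc.
  rewrite uE; apply: le_trans (enormD _ _) _; apply: lerD => //.
  by apply: le_trans (enormD _ _) _; rewrite enormN.
have U0 := enorm_ge0 u.
set mb := (mu k * beta)^-1.
have mb0 : 0 <= mb by rewrite invr_ge0 mulr_ge0 ?ltW.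
have -> : (mu k * beta)^-2 = mb ^+ 2 by rewrite /mb exprVn.
have -> : beta^-2 = beta^-1 ^+ 2 by rewrite exprVn.
move: hC; rewrite -/mb => hC.
set Cn := enorm Cc.
have hU2 : enorm u ^+ 2 <= 3 * (enorm A ^+ 2 + E ^+ 2 + Cn ^+ 2).
  have s0 : 0 <= enorm A + E + Cn by rewrite !addr_ge0 // enorm_ge0.
  have : enorm u ^+ 2 <= (enorm A + E + Cn) ^+ 2.
    by rewrite !expr2; exact: (ler_pM U0 U0 hU hU).
  move=> H; apply: le_trans H _.
  have := sqr_ge0 (enorm A - E); have := sqr_ge0 (E - Cn); have := sqr_ge0 (enorm A - Cn).
  rewrite !expr2 => *; nra.
have hA2 : enorm A ^+ 2 <= L ^+ 2 * X ^+ 2.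
  by rewrite -exprMn !expr2; exact: (ler_pM A0 A0 hA hA).
have first : enorm u ^+ 2 <= 3 * E ^+ 2 + 3 * (L ^+ 2 + mb ^+ 2) * dw2.
  apply: le_trans hU2 _; rewrite /dw2 -/X -/Z /Cn hC exprMn.
  have := mulr_ge0 (sqr_ge0 L) (sqr_ge0 Z); have := mulr_ge0 (sqr_ge0 mb) (sqr_ge0 X).
  move=> *; nra.
split => //.
rewrite ge_max; apply/andP; split.
  apply: le_trans first _; rewrite lerD2l ler_wpM2r ?lerDl ?sqr_ge0 //.
  by rewrite /dw2 addr_ge0 // sqr_ge0.
rewrite hP exprMn.
have := mulr_ge0 (sqr_ge0 (beta^-1)) (sqr_ge0 X).
have := mulr_ge0 (sqr_ge0 L) (addr_ge0 (sqr_ge0 X) (sqr_ge0 Z)).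
have := mulr_ge0 (sqr_ge0 mb) (addr_ge0 (sqr_ge0 X) (sqr_ge0 Z)).
rewrite /dw2 -/X -/Z => *; nra.
Qed.
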